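(* Let $G$ be a finitely generated group of exponential growth with finite generating set $A$, $S=A\cup A^{-1}$, and let $\psi:L\to G$, $L\subseteq S^*$, be a Cayley automatic representation of $G$. Then there exist constants $\lambda_1,\lambda_2>0$ such that, with $B_n=\{g\in G: d_A(g)\le n\}$ and $Q_n=\{g\in B_n : \lambda_1 d_A(g)\le|\psi^{-1}(g)|\le\lambda_2 d_A(g)\}$, one has $\lim_{n\to\infty}\#Q_n/\#B_n=1$. Moreover, for every $g\in Q_n$, writing $w=\psi^{-1}(g)$, $d_A(\pi(w),\psi(w))\le(1+1/\lambda_1)|w|$.
   Context: $\pi:S^*\to G$ is the evaluation map and $d_A$ the word metric of $\Gamma(G,A)$, $d_A(g)=d_A(e,g)$. Exponential growth means there is $\lambda>1$ with $\#B_n\ge\lambda^n$ for all large $n$. A Cayley automatic representation is a bijection $\psi:L\to G$ from a regular $L\subseteq S^*$ such that for each $a\in A$ the relation $\{(\psi^{-1}(g),\psi^{-1}(ga)) : g\in G\}$ is FA-recognizable (the language of convolutions — parallel readings of the two strings with the shorter padded by a new symbol — is regular). *)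

(* Defs.v *)
From Stdlib Require Import Reals.
From HB Require Import structures.
From mathcomp Require Import all_boot.

Set Implicit Arguments.
Unset Strict Implicit.
Unset Printing Implicit Defensive.

Record is_group (G : Type) (mul : G -> G -> G) (inv : G -> G) (one : G) : Prop := {
  grp_assoc : forall x y z, mul x (mul y z) = mul (mul x y) z;
  grp_mul1 : forall x, mul one x = x;
  grp_mulV : forall x, mul (inv x) x = one
}.

Section Cayley.
Variables (G : choiceType) (mul : G -> G -> G) (inv : G -> G) (one : G).
Variable A : seq G.

Definition Salph : seq G := A ++ map inv A.
Definition S : finType := seq_sub Salph.

Definition evalw (w : seq S) : G := foldr (fun s g => mul (val s) g) one w.

Definition words_eq (k : nat) : seq (seq S) := [seq tval t | t <- enum {: k.-tuple S}].
Definition words_le (n : nat) : seq (seq S) := flatten [seq words_eq k | k <- iota 0 n.+1].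

Definition ball (n : nat) : seq G := undup [seq evalw w | w <- words_le n].

Definition generates : Prop := forall g : G, exists n, g \in ball n.

Definition dA (gen : generates) (g : G) : nat := ex_minn (gen g).
Definition wdist (gen : generates) (g h : G) : nat := dA gen (mul (inv g) h).

Definition exp_growth : Prop :=
  exists lam : R, Rlt 1 lam /\ exists N, forall n, (N <= n)%N ->
     Rle (pow lam n) (INR (size (ball n))).

End Cayley.

Record dfa (Sig : finType) := DFA {
  dfa_state : finType;
  dfa_start : dfa_state;
  dfa_final : pred dfa_state;
  dfa_trans : dfa_state -> Sig -> dfa_state
}.

Definition dfa_accepts (Sig : finType) (M : dfa Sig) (w : seq Sig) : bool :=
  @dfa_final Sig M (foldl (@dfa_trans Sig M) (@dfa_start Sig M) w).

Definition regular (Sig : finType) (L : pred (seq Sig)) : Prop :=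
  exists M : dfa Sig, forall w, dfa_accepts M w = L w.

(* Convolution of two words: parallel reading, shorter padded with a new
   symbol (None). *)
Definition pad (T : Type) (n : nat) (u : seq T) : seq (option T) :=
  map Some u ++ nseq (n - size u) None.

Definition conv (T : Type) (u v : seq T) : seq (option T * option T) :=
  let n := maxn (size u) (size v) in zip (pad n u) (pad n v).

Definition fa_recognizable (T : finType) (Rel : seq T -> seq T -> Prop) : Prop :=
  exists M : dfa (option T * option T)%type,
    forall x, dfa_accepts M x <-> exists u v, x = conv u v /\ Rel u v.

Definition cayley_automatic (G : choiceType) (mul : G -> G -> G) (inv : G -> G)
    (A : seq G) (L : pred (seq (S inv A))) (psi : seq (S inv A) -> G)
    (psiinv : G -> seq (S inv A)) : Prop :=
  [/\ regular L,
      (forall g, L (psiinv g) /\ psi (psiinv g) = g),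
      (forall w, L w -> psiinv (psi w) = w) &
      (forall a, a \in A ->
         fa_recognizable (fun u v => exists g, u = psiinv g /\ v = psiinv (mul g a)))].

Definition Rleb (x y : R) : bool := if Rle_dec x y then true else false.

Definition Qset (G : choiceType) (mul : G -> G -> G) (inv : G -> G) (one : G)
    (A : seq G) (gen : generates mul inv one A) (psiinv : G -> seq (S inv A))
    (l1 l2 : R) (n : nat) : seq G :=
  [seq g <- ball mul inv one A n |
     Rleb (l1 * INR (dA gen g)) (INR (size (psiinv g))) &&
     Rleb (INR (size (psiinv g))) (l2 * INR (dA gen g))].

(* Main.v *)
Require Import Defs.
From Stdlib Require Import Reals Lra Classical.
From HB Require Import structures.
From mathcomp Require Import all_boot.
From mathcomp Require Import zify.

Set Implicit Arguments.
Unset Strict Implicit.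



Lemma grp_mulrV (G : Type) (mul : G -> G -> G) inv one (HG : is_group mul inv one) x :
  mul x (inv x) = one.
Proof.
case: HG => As M1 MV.
set y := inv x.
transitivity (mul (mul (inv y) y) (mul x y)); first by rewrite MV M1.
by rewrite -As (As y x y) /y MV M1.
Qed.

Lemma grp_mul1r (G : Type) (mul : G -> G -> G) inv one (HG : is_group mul inv one) x :
  mul x one = x.
Proof.
have V := grp_mulrV HG x.
case: HG => As M1 MV.
by rewrite -(MV x) As V M1.
Qed.

Lemma grp_invK (G : Type) (mul : G -> G -> G) inv one (HG : is_group mul inv one) x :
  inv (inv x) = x.
Proof.
have R1 := grp_mul1r HG. have V := grp_mulrV HG.
case: HG => As M1 MV.
by rewrite -[inv (inv x)]R1 -(MV x) As MV M1.
Qed.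

Lemma grp_cancel (G : Type) (mul : G -> G -> G) inv one (HG : is_group mul inv one) x y a :
  mul x a = mul y a -> x = y.
Proof.
move=> E.
have R1 := grp_mul1r HG. have V := grp_mulrV HG.
case: HG => As M1 MV.
by rewrite -(R1 x) -(R1 y) -(V a) !As E.
Qed.



Lemma mem_words_eq (G : choiceType) (inv : G -> G) (A : seq G) k (w : seq (S inv A)) :
  (w \in words_eq inv A k) = (size w == k).
Proof.
apply/idP/idP.
  by case/mapP => t _ ->; rewrite size_tuple.
move/eqP=> Hw; apply/mapP.
have Hw' : size w == k by rewrite Hw.
exists (Tuple Hw'); first by rewrite mem_enum.
by [].
Qed.

Lemma mem_words_le (G : choiceType) (inv : G -> G) (A : seq G) n (w : seq (S inv A)) :
  (w \in words_le inv A n) = (size w <= n).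
Proof.
apply/idP/idP.
  case/flatten_mapP => k; rewrite mem_iota => /andP [_ Hk].
  by rewrite mem_words_eq => /eqP ->; rewrite -ltnS.
move=> Hw; apply/flatten_mapP; exists (size w).
  by rewrite mem_iota /= add0n ltnS.
by rewrite mem_words_eq.
Qed.

Lemma mem_ball (G : choiceType) mul (inv : G -> G) one (A : seq G) n g :
  reflect (exists w : seq (S inv A), size w <= n /\ evalw mul one w = g)
          (g \in ball mul inv one A n).
Proof.
apply: (iffP idP).
  rewrite mem_undup => /mapP [w Hw ->]; exists w; split => //.
  by rewrite -mem_words_le.
case=> w [Hw <-]; rewrite mem_undup; apply/mapP; exists w => //.
by rewrite mem_words_le.
Qed.

Lemma dA_spec (G : choiceType) mul (inv : G -> G) one (A : seq G)
   (gen : generates mul inv one A) g :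
  exists w : seq (S inv A), size w <= dA gen g /\ evalw mul one w = g.
Proof.
rewrite /dA; case: ex_minnP => m Hm _.
by apply/mem_ball.
Qed.

Lemma dA_le (G : choiceType) mul (inv : G -> G) one (A : seq G)
   (gen : generates mul inv one A) (w : seq (S inv A)) :
  dA gen (evalw mul one w) <= size w.
Proof.
rewrite /dA; case: ex_minnP => m Hm Hmin.
apply: Hmin; apply/mem_ball; by exists w.
Qed.

Lemma dA_ball (G : choiceType) mul (inv : G -> G) one (A : seq G)
   (gen : generates mul inv one A) n g :
  (g \in ball mul inv one A n) = (dA gen g <= n).
Proof.
apply/idP/idP.
  case/mem_ball => w [Hw <-]; exact: leq_trans (dA_le gen w) Hw.
move=> H; case: (dA_spec gen g) => w [Hw Hg]; apply/mem_ball; exists w; split => //.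
exact: leq_trans Hw H.
Qed.

Lemma evalw_cat (G : choiceType) mul (inv : G -> G) one (A : seq G)
  (HG : is_group mul inv one) (w1 w2 : seq (S inv A)) :
  evalw mul one (w1 ++ w2) = mul (evalw mul one w1) (evalw mul one w2).
Proof.
case: (HG) => As M1 MV.
elim: w1 => [|s w1 IH] /=; first by rewrite M1.
by rewrite IH As.
Qed.

Lemma evalw_rcons (G : choiceType) mul (inv : G -> G) one (A : seq G)
  (HG : is_group mul inv one) (w : seq (S inv A)) s :
  evalw mul one (rcons w s) = mul (evalw mul one w) (val s).
Proof.
by rewrite -cats1 evalw_cat //= (grp_mul1r HG).
Qed.

Lemma inv_Salph (G : choiceType) (inv : G -> G) (A : seq G) mul one
  (HG : is_group mul inv one) (s : S inv A) : inv (val s) \in Salph inv A.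
Proof.
have := valP s; rewrite /Salph !mem_cat => /orP [H|/mapP [a Ha ->]].
  by rewrite map_f ?orbT.
by rewrite (grp_invK HG) Ha.
Qed.

Definition sinv (G : choiceType) (inv : G -> G) (A : seq G) (s : S inv A) : S inv A :=
  insubd s (inv (val s)).

Lemma val_sinv (G : choiceType) (inv : G -> G) (A : seq G) mul one
  (HG : is_group mul inv one) (s : S inv A) : val (sinv s) = inv (val s).
Proof. by rewrite /sinv insubdK //; apply: (inv_Salph HG). Qed.

Lemma evalw_inv (G : choiceType) mul (inv : G -> G) one (A : seq G)
  (HG : is_group mul inv one) (w : seq (S inv A)) :
  inv (evalw mul one w) = evalw mul one (rev (map (@sinv G inv A) w)).
Proof.
elim: w => [|s w IH] /=.
  have := grp_mul1r HG (inv one); case: (HG) => _ _ MV; by rewrite MV.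
rewrite rev_cons evalw_rcons // -IH (val_sinv HG).
have -> : ssval s = val s by [].
apply: (@grp_cancel _ _ _ _ HG _ _ (mul (val s) (evalw mul one w))).
case: (HG) => As M1 MV.
rewrite MV -As (As (inv (val s)) (val s)) MV M1 MV //.
Qed.

Lemma dA_mul (G : choiceType) mul (inv : G -> G) one (A : seq G)
  (HG : is_group mul inv one) (gen : generates mul inv one A) x y :
  dA gen (mul x y) <= dA gen x + dA gen y.
Proof.
case: (dA_spec gen x) => u [Hu Hx]; case: (dA_spec gen y) => v [Hv Hy].
have -> : mul x y = evalw mul one (u ++ v) by rewrite evalw_cat // Hx Hy.
apply: leq_trans (dA_le _ _) _.
rewrite size_cat; exact: leq_add.
Qed.

Lemma dA_inv (G : choiceType) mul (inv : G -> G) one (A : seq G)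
  (HG : is_group mul inv one) (gen : generates mul inv one A) x :
  dA gen (inv x) <= dA gen x.
Proof.
case: (dA_spec gen x) => u [Hu Hx].
rewrite -Hx evalw_inv //; apply: leq_trans (dA_le _ _) _.
by rewrite size_rev size_map Hx.
Qed.

Lemma dA_eq0 (G : choiceType) mul (inv : G -> G) one (A : seq G)
  (gen : generates mul inv one A) x :
  dA gen x = 0 -> x = one.
Proof.
case: (dA_spec gen x) => u [Hu Hx] H; rewrite H leqn0 in Hu.
by move/eqP/size0nil: Hu => Hu; rewrite -Hx Hu.
Qed.

Lemma wdist_bound (G : choiceType) mul (inv : G -> G) one (A : seq G)
  (HG : is_group mul inv one) (gen : generates mul inv one A) (w : seq (S inv A)) g :
  wdist gen (evalw mul one w) g <= size w + dA gen g.
Proof.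
rewrite /wdist; apply: leq_trans (dA_mul HG gen _ _) _.
rewrite leq_add2r; apply: leq_trans (dA_inv HG gen _) _.
exact: dA_le.
Qed.



Definition swp (T : Type) (p : option T * option T) := (p.2, p.1).

Lemma zip_nseq_None (T : Type) (r : seq T) :
  zip (nseq (size r) (@None T)) (map Some r) = map (fun b => (None, Some b)) r.
Proof. by elim: r => //= b r ->. Qed.

Lemma conv_split (T : Type) (u v : seq T) : size u <= size v ->
  conv u v = zip (map Some u) (map Some (take (size u) v))
             ++ map (fun b => (None, Some b)) (drop (size u) v).
Proof.
move=> H; rewrite /conv /pad (maxn_idPr H) subnn /= cats0.
rewrite -{2}(cat_take_drop (size u) v) map_cat zip_cat; last first.
  by rewrite !size_map size_takel.
by rewrite -zip_nseq_None size_drop.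
Qed.

Lemma map_swp_zip (T : Type) (a b : seq (option T)) :
  map (@swp T) (zip a b) = zip b a.
Proof. by elim: a b => [|x a IH] [|y b] //=; rewrite IH. Qed.

Lemma conv_swap (T : Type) (u v : seq T) : conv u v = map (@swp T) (conv v u).
Proof. by rewrite /conv map_swp_zip maxnC. Qed.

Lemma swpK (T : Type) : involutive (@swp T).
Proof. by case. Qed.

Lemma pmap_pad (T : Type) n (u : seq T) : pmap id (pad n u) = u.
Proof.
rewrite /pad pmap_cat.
have -> : pmap id (nseq (n - size u) (@None T)) = [::] by elim: (n - size u).
by rewrite cats0; elim: u => //= x u ->.
Qed.

Lemma size_pad (T : Type) n (u : seq T) : size u <= n -> size (pad n u) = n.
Proof. by move=> H; rewrite /pad size_cat size_map size_nseq subnKC. Qed.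

Lemma conv_inj (T : Type) (u v u' v' : seq T) :
  conv u v = conv u' v' -> u = u' /\ v = v'.
Proof.
have E1 : forall a b : seq T, pmap id (unzip1 (conv a b)) = a.
  move=> a b; rewrite /conv unzip1_zip ?pmap_pad //.
  by rewrite !size_pad // ?leq_maxl ?leq_maxr.
have E2 : forall a b : seq T, pmap id (unzip2 (conv a b)) = b.
  move=> a b; rewrite /conv unzip2_zip ?pmap_pad //.
  by rewrite !size_pad // ?leq_maxl ?leq_maxr.
by move=> E; split; [rewrite -(E1 u v) E E1 | rewrite -(E2 u v) E E2].
Qed.

Lemma pump (Sig : finType) (M : dfa Sig) (p t : seq Sig) :
  dfa_accepts M (p ++ t) -> #|dfa_state M| < size t ->
  exists i j, [/\ i < j, j <= size t & dfa_accepts M (p ++ (take i t ++ drop j t))].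
Proof.
move=> Hacc Hsz.
set q0 := foldl (@dfa_trans Sig M) (@dfa_start Sig M) p.
pose f := fun k : 'I_(size t).+1 => foldl (@dfa_trans Sig M) q0 (take k t).
have Hni : ~ injective f.
  move=> /leq_card; rewrite card_ord => H.
  lia.
have [i [j [Hij Hne]]] : exists i j, f i = f j /\ i <> j.
  apply: NNPP => Hn; apply: Hni => x y Hxy.
  apply: NNPP => Hxy'; apply: Hn; by exists x, y.
have key : forall (a b : 'I_(size t).+1), a < b -> f a = f b ->
   dfa_accepts M (p ++ (take a t ++ drop b t)).
  move=> a b Hab Hf.
  move: Hacc; rewrite /dfa_accepts !foldl_cat -/q0.
  rewrite -{1}(cat_take_drop b t) foldl_cat.
  by rewrite -/(f b) -Hf.
case: (ltngtP i j) => H.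
- exists i, j; split => //; first by rewrite -ltnS.
  exact: key.
- exists j, i; split => //; first by rewrite -ltnS.
  exact: key.
- by case: Hne; apply: val_inj.
Qed.

Lemma step_le (T : finType) (M : dfa (option T * option T)%type)
  (Rel : seq T -> seq T -> Prop)
  (HM : forall x, dfa_accepts M x <-> exists u v, x = conv u v /\ Rel u v)
  (Hfun : forall u v v', Rel u v -> Rel u v' -> v = v') u v :
  Rel u v -> size v <= size u + #|dfa_state M|.
Proof.
move=> Huv; rewrite leqNgt; apply/negP => Hlt.
have Huv' : size u <= size v by lia.
have Hacc : dfa_accepts M (conv u v) by apply/HM; exists u, v.
rewrite conv_split // in Hacc.
set r := drop (size u) v in Hacc.
have Hr : #|dfa_state M| < size (map (fun b => (None : option T, Some b)) r).
  by rewrite size_map size_drop; lia.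
case: (pump Hacc Hr) => i [j [Hij Hj Hacc2]].
rewrite -map_take -map_drop -map_cat in Hacc2.
set r' := take i r ++ drop j r in Hacc2.
set v' := take (size u) v ++ r'.
have Hsv' : size (take (size u) v) = size u by rewrite size_takel.
have Hc : conv u v' = zip (map Some u) (map Some (take (size u) v))
             ++ map (fun b => (None, Some b)) r'.
  rewrite conv_split; last by rewrite size_cat Hsv' leq_addr.
  by rewrite /v' take_size_cat // drop_size_cat.
rewrite -Hc in Hacc2.
case/HM: Hacc2 => u0 [v0 [E HR]].
case: (conv_inj E) => Eu Ev; rewrite -Eu -Ev in HR.
have Evv := Hfun _ _ _ Huv HR.
have : size v' < size v.
  rewrite /v' /r' !size_cat Hsv' size_take size_drop.
  rewrite size_map /r size_drop in Hj.
  have Hsr : size r = size v - size u by rewrite /r size_drop.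
  case: (ltnP i (size r)) => Hi; lia.
by rewrite -Evv ltnn.
Qed.

Lemma accepts_swp (T : finType) (M : dfa (option T * option T)%type) x :
  dfa_accepts (DFA (@dfa_start _ M) (@dfa_final _ M)
                   (fun q c => @dfa_trans _ M q (swp c))) x
  = dfa_accepts M (map (@swp T) x).
Proof.
rewrite /dfa_accepts /=; congr (_ _).
by elim: x (@dfa_start _ M) => //= c x IH q; rewrite IH.
Qed.

Lemma step_ge (T : finType) (M : dfa (option T * option T)%type)
  (Rel : seq T -> seq T -> Prop)
  (HM : forall x, dfa_accepts M x <-> exists u v, x = conv u v /\ Rel u v)
  (Hfun : forall u u' v, Rel u v -> Rel u' v -> u = u') u v :
  Rel u v -> size u <= size v + #|dfa_state M|.
Proof.
move=> Huv.
pose M' := DFA (@dfa_start _ M) (@dfa_final _ M) (fun q c => @dfa_trans _ M q (swp c)).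
have := @step_le T M' (fun a b => Rel b a); apply => //.
- move=> x; rewrite accepts_swp HM; split.
    case=> a [b [E H]]; exists b, a; split => //.
    by rewrite -(mapK (@swpK T) x) E -conv_swap.
  case=> a [b [E H]]; exists b, a; split => //.
  by rewrite E -conv_swap.
- by move=> a b b' H1 H2; apply: Hfun H1 H2.
Qed.

Section LimitPart.

Local Open Scope R_scope.

Lemma INR_expn m k : INR (m ^ k)%N = INR m ^ k.
Proof.
elim: k => [|k IH] //=; by rewrite expnS mulnE mult_INR IH.
Qed.

Lemma INR_addn a c : INR (a + c)%N = INR a + INR c.
Proof. by rewrite addnE plus_INR. Qed.

Lemma limit_lemma (b q : nat -> nat) (lam : R) (cn N M : nat) :
  (forall n, q n <= b n)%N -> (forall n, 0 < b n)%N -> (0 < M)%N -> (0 < cn)%N ->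
  (forall n, N <= n -> Rle (pow lam n) (INR (b n)))%N ->
  Rlt 1 lam ->
  Rle (2 * INR cn) (pow lam M) ->
  (forall n, b n - q n <= 1 + cn ^ ((n.-1) %/ M))%N ->
  Un_cv (fun n => Rdiv (INR (q n)) (INR (b n))) 1.
Proof.
move=> Hqb Hb HM Hc Hgrow Hlam HlamM Hbad eps Heps.
have Hx : Rabs (/2) < 1 by rewrite Rabs_right; lra.
have Heps2 : (0 < eps / 2) by lra.
have [K0 HK0] := pow_lt_1_zero _ Hx _ Heps2.
exists (maxn N (K0 * M).+1) => n /leP Hn.
set K := n.-1 %/ M.
have HK : (K0 <= K)%N by rewrite leq_divRL //; lia.
have HKM : (K * M <= n)%N by have := leq_divM n.-1 M; lia.
have HcR : (1 <= INR cn) by apply: (le_INR 1); apply/leP.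
set X := (INR cn ^ K).
set Y := (2 ^ K).
have HX : (1 <= X) by apply: pow_R1_Rle.
have HY : (0 < Y) by apply: pow_lt; lra.
have HB : (Y * X <= INR (b n)).
  apply: Rle_trans (Hgrow n _); last by lia.
  apply: Rle_trans (Rle_pow lam (M * K) n _ _); last 2 first.
  - lra.
  - apply/leP; lia.
  rewrite pow_mult /Y /X -Rpow_mult_distr; apply: pow_incr.
  split; [lra | by []].
have HD : (INR (b n - q n) <= 2 * X).
  have H1 := le_INR _ _ (@leP _ _ (Hbad n)).
  rewrite INR_addn INR_expn /= -/K -/X in H1; lra.
have HYe : (2 < eps * Y).
  have := HK0 K (@leP _ _ HK).
  rewrite Rabs_right; last by apply: Rle_ge; apply: pow_le; lra.
  rewrite pow_inv -/Y => H.
  have : (/ Y * Y < eps / 2 * Y) by apply: Rmult_lt_compat_r.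
  rewrite Rinv_l; lra.
have HBpos : (0 < INR (b n)) by apply: (lt_INR 0); apply/ltP.
rewrite /Rdist.
rewrite minus_INR in HD; last exact: (@leP _ _ (Hqb n)).
have E : (INR (q n) / INR (b n) - 1 = - ((INR (b n) - INR (q n)) / INR (b n))).
  by field; lra.
rewrite E Rabs_Ropp Rabs_right; last first.
  apply: Rle_ge; apply: Rmult_le_pos; last by apply: Rlt_le; apply: Rinv_0_lt_compat.
  have := le_INR _ _ (@leP _ _ (Hqb n)); lra.
have H2 : 2 * X < eps * Y * X by nra.
have H3 : eps * Y * X <= eps * INR (b n) by nra.
apply: (Rmult_lt_reg_r (INR (b n))) => //.
rewrite /Rdiv Rmult_assoc Rinv_l; lra.
Qed.

End LimitPart.



Lemma uniformC (T : eqType) (P : T -> nat -> Prop)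
  (mono : forall a c c', c <= c' -> P a c -> P a c') (l : seq T) :
  (forall a, a \in l -> exists c, P a c) -> exists C, forall a, a \in l -> P a C.
Proof.
elim: l => [|x l IH] H; first by exists 0.
have [c Hc] := H x (mem_head _ _).
have [C HC] : exists C, forall a, a \in l -> P a C.
  by apply: IH => a Ha; apply: H; rewrite in_cons Ha orbT.
exists (maxn c C) => a; rewrite in_cons => /orP [/eqP ->|Ha].
  exact: mono (leq_maxl _ _) Hc.
exact: mono (leq_maxr _ _) (HC a Ha).
Qed.

Lemma step_bounds (G : choiceType) mul (inv : G -> G) one (A : seq G)
  (HG : is_group mul inv one)
  (L : pred (seq (S inv A))) (psi : seq (S inv A) -> G) (psiinv : G -> seq (S inv A))
  (Haut : cayley_automatic mul L psi psiinv) :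
  exists C, forall a, a \in A -> forall g,
    size (psiinv (mul g a)) <= size (psiinv g) + C /\
    size (psiinv g) <= size (psiinv (mul g a)) + C.
Proof.
case: Haut => _ Hpsi _ Hrec.
have inj : injective psiinv.
  by move=> x y E; rewrite -(proj2 (Hpsi x)) E (proj2 (Hpsi y)).
apply: uniformC.
  move=> a c c' Hcc H g; case: (H g) => H1 H2; split; lia.
move=> a Ha; case: (Hrec a Ha) => M HM.
exists #|dfa_state M| => g; split.
- apply: (step_le HM); last by exists g.
  move=> u v v' [g1 [E1 E2]] [g2 [E3 E4]].
  by rewrite E2 E4 (inj g1 g2) // -E1 -E3.
- apply: (step_ge HM); last by exists g.
  move=> u u' v [g1 [E1 E2]] [g2 [E3 E4]].
  have Eg : g1 = g2.
    apply: (@grp_cancel _ _ _ _ HG _ _ a); apply: inj; by rewrite -E2 -E4.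
  by rewrite E1 E3 Eg.
Qed.

Lemma word_bound (G : choiceType) mul (inv : G -> G) one (A : seq G)
  (HG : is_group mul inv one) (psiinv : G -> seq (S inv A)) C
  (HC : forall a, a \in A -> forall g,
    size (psiinv (mul g a)) <= size (psiinv g) + C /\
    size (psiinv g) <= size (psiinv (mul g a)) + C)
  (w : seq (S inv A)) :
  size (psiinv (evalw mul one w)) <= size (psiinv one) + C * size w.
Proof.
elim/last_ind: w => [|w s IH]; first by rewrite /= muln0 addn0.
rewrite evalw_rcons // size_rcons mulnS.
set x := evalw mul one w in IH *.
have : val s \in Salph inv A := valP s.
rewrite mem_cat => /orP [Ha|/mapP [a Ha Es]].
  have := proj1 (HC _ Ha x); lia.
have E : mul (mul x (val s)) a = x.
  rewrite Es; case: (HG) => As M1 MV.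
  by rewrite -As MV (grp_mul1r HG).
have := proj2 (HC _ Ha (mul x (val s))); rewrite E; lia.
Qed.



Lemma size_words_eq (G : choiceType) (inv : G -> G) (A : seq G) k :
  size (words_eq inv A k) = #|S inv A| ^ k.
Proof. by rewrite /words_eq size_map -cardE card_tuple. Qed.

Lemma leq_expr m n e : m <= n -> m ^ e <= n ^ e.
Proof. by move=> H; elim: e => // e IH; rewrite !expnS leq_mul. Qed.

Lemma size_words_le (G : choiceType) (inv : G -> G) (A : seq G) K :
  size (words_le inv A K) <= (#|S inv A|.+1) ^ K.
Proof.
elim: K => [|K IH].
  by rewrite /words_le /= cats0 size_words_eq.
have -> : words_le inv A K.+1 = words_le inv A K ++ words_eq inv A K.+1.
  by rewrite /words_le -addn1 iotaD map_cat flatten_cat /= cats0.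
rewrite size_cat size_words_eq expnS.
have H : #|S inv A| ^ K <= #|S inv A|.+1 ^ K by apply: leq_expr.
rewrite expnS mulSn; apply: leq_add => //; exact: leq_mul.
Qed.

Lemma low_count (G : choiceType) mul (inv : G -> G) one (A : seq G)
  (gen : generates mul inv one A) (psiinv : G -> seq (S inv A))
  (inj : injective psiinv) M n : 0 < M ->
  count (fun g => M * size (psiinv g) < dA gen g) (ball mul inv one A n)
    <= (#|S inv A|.+1) ^ (n.-1 %/ M).
Proof.
move=> HM.
rewrite -size_filter -(size_map psiinv).
apply: leq_trans (size_words_le inv A _).
apply: uniq_leq_size.
  by rewrite (map_inj_uniq inj) filter_uniq // undup_uniq.
move=> w /mapP [g]; rewrite mem_filter => /andP [Hlow Hg] ->.
rewrite mem_words_le leq_divRL //.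
rewrite (dA_ball gen) in Hg; lia.
Qed.

Lemma RlebP x y : Rleb x y = true <-> Rle x y.
Proof. by rewrite /Rleb; case: Rle_dec. Qed.

Lemma in_ball_one (G : choiceType) mul (inv : G -> G) one (A : seq G) n :
  one \in ball mul inv one A n.
Proof. by apply/mem_ball; exists [::]. Qed.

Unset Implicit Arguments.
Set Strict Implicit.

Theorem mainTheorem13 (G : choiceType) (mul : G -> G -> G) (inv : G -> G) (one : G)
  (HG : is_group mul inv one) (A : seq G) (gen : generates mul inv one A)
  (Hexp : exp_growth mul inv one A)
  (L : pred (seq (S inv A))) (psi : seq (S inv A) -> G) (psiinv : G -> seq (S inv A))
  (Haut : cayley_automatic mul L psi psiinv) :
  exists l1 l2 : R, Rlt 0 l1 /\ Rlt 0 l2 /\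
    Un_cv (fun n => Rdiv (INR (size (Qset gen psiinv l1 l2 n)))
                         (INR (size (ball mul inv one A n)))) 1 /\
    (forall n g, g \in Qset gen psiinv l1 l2 n ->
       let w := psiinv g in
       Rle (INR (wdist gen (evalw mul one w) (psi w)))
           (Rmult (Rplus 1 (Rinv l1)) (INR (size w)))).
Proof.
Local Open Scope R_scope.
have Haut' := Haut.
case: Haut => Hreg Hpsi Hpsi2 Hrec.
have inj : injective psiinv.
  by move=> x y E; rewrite -(proj2 (Hpsi x)) E (proj2 (Hpsi y)).
have [C HC] := step_bounds HG Haut'.
set P := size (psiinv one).
have Hup : forall g, (size (psiinv g) <= P + C * dA gen g)%N.
  move=> g; case: (dA_spec gen g) => w [Hw Hg].
  have := word_bound HG HC w; rewrite Hg => H; apply: leq_trans H _.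
  by rewrite leq_add2l leq_mul2l Hw orbT.
case: Hexp => lam [Hlam [N HN]].
set cn := #|S inv A|.+1.
have [M [HM HlamM]] : exists M, (0 < M)%N /\ Rle (2 * INR cn) (pow lam M).
  have Habs : Rgt (Rabs lam) 1 by rewrite Rabs_right; lra.
  have [N' HN'] := Pow_x_infinity _ Habs (2 * INR cn).
  exists N'.+1; split => //.
  have := HN' N'.+1 (le_S _ _ (le_n _)).
  rewrite Rabs_right; first lra.
  apply: Rle_ge; apply: pow_le; lra.
have HMR : Rlt 0 (INR M) by apply: lt_0_INR; apply/ltP.
exists (/ INR M), (INR (P + C).+1).
split; first by apply: Rinv_0_lt_compat.
split; first by apply: lt_0_INR; apply/ltP.
split.
  apply: (@limit_lemma (fun n => size (ball mul inv one A n))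
            (fun n => size (Qset gen psiinv (/ INR M) (INR (P + C).+1) n)) lam cn N M) => //.
  - by move=> n; rewrite /Qset size_filter count_size.
  - move=> n; case E: (ball mul inv one A n) => [|x s] //.
    by have := in_ball_one mul inv one A n; rewrite E.
  - move=> n; rewrite /Qset size_filter.
    set s := ball mul inv one A n.
    set good := (fun g : G => _ && _).
    rewrite -(count_predC good s) addKn.
    have Hsub : subpred (predC good)
       (predU (pred1 one) (fun g => M * size (psiinv g) < dA gen g)%N).
      move=> g /=; apply: contraR; rewrite negb_or => /andP [Hne Hlow].
      rewrite -leqNgt in Hlow.
      have Hd0 : (0 < dA gen g)%N.
        rewrite lt0n; apply/negP => /eqP /dA_eq0 E; by rewrite E eqxx in Hne.
      rewrite /good; apply/andP; split; apply/RlebP.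
      + have H1 := le_INR _ _ (@leP _ _ Hlow).
        rewrite mulnE mult_INR in H1.
        apply: (Rmult_le_reg_l (INR M)) => //.
        rewrite -Rmult_assoc Rinv_r. rewrite Rmult_1_l; exact H1. lra.
      + have H2 : (size (psiinv g) <= (P + C).+1 * dA gen g)%N.
          apply: leq_trans (Hup g) _; nia.
        have H3 := le_INR _ _ (@leP _ _ H2).
        by rewrite mulnE mult_INR in H3.
    apply: leq_trans (sub_count Hsub s) _.
    have := count_predUI (pred1 one) (fun g => M * size (psiinv g) < dA gen g)%N s.
    have Hone : (count (pred1 one) s <= 1)%N.
      have := count_uniq_mem one (undup_uniq _ : uniq s).
      by rewrite /= => ->; apply: leq_b1.
    have Hlow := low_count gen inj n HM.
    rewrite -/s in Hlow. rewrite -/cn in Hlow. move=> E. apply: leq_trans (leq_add Hone Hlow). by rewrite -E leq_addr.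
move=> n g; rewrite /Qset mem_filter => /andP [/andP [H1 _] _] /=.
move/RlebP: H1 => H1.
have Hd : Rle (INR (dA gen g)) (INR M * INR (size (psiinv g))).
  have := Rmult_le_compat_l (INR M) _ _ (Rlt_le _ _ HMR) H1.
  by rewrite -Rmult_assoc Rinv_r; [rewrite Rmult_1_l | lra].
have Hw := wdist_bound HG gen (psiinv g) (psi (psiinv g)).
rewrite (proj2 (Hpsi g)) in Hw.
have := le_INR _ _ (@leP _ _ Hw); rewrite addnE plus_INR Rinv_inv.
rewrite (proj2 (Hpsi g)). move=> H; apply: (Rle_trans _ _ _ H); rewrite Rmult_plus_distr_r Rmult_1_l; apply: Rplus_le_compat_l; exact: Hd.
Qed.
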